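(* Let $N=2^n$ and $i,j\in[0,N)$ with $i<j$. Then every $\mathbf{x}\in C^{(n)}(i,j):=\mathbf{g}_i+\mathbf{g}_j+\langle\mathbf{g}_{j+1},\ldots,\mathbf{g}_{N-1}\rangle$ satisfies $\mathrm{w}(\mathbf{x})\ge\mathrm{w}(\mathbf{g}_i+\mathbf{g}_j)$, and $$\mathrm{w}(\mathbf{g}_i+\mathbf{g}_j)=\mathrm{w}(\mathbf{g}_i)+\mathrm{w}(\mathbf{g}_j)-2^{t_{i,j}+1},\qquad t_{i,j}:=\sum_{k=0}^{n-1}b_k(i)b_k(j).$$
   Context: All vectors are binary (over $GF(2)$), indices are zero-based, $\mathrm{w}(\cdot)$ is Hamming weight and $\langle\cdot\rangle$ denotes linear span over $GF(2)$. Let $G_N=\begin{pmatrix}1&0\\1&1\end{pmatrix}^{\otimes n}$ for $N=2^n$, with rows $\mathbf{g}_0,\ldots,\mathbf{g}_{N-1}$. For $k\in[0,N)$, $b_r(k)$ denotes the $r$-th bit of $k$, i.e. $k=\sum_{r=0}^{n-1}b_r(k)2^r$. *)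

(* Defs.v *)
From mathcomp Require Import all_boot all_order all_algebra.
Set Implicit Arguments. Unset Strict Implicit. Unset Printing Implicit Defensive.
Import GRing.Theory.
Local Open Scope ring_scope.

Definition bit (r k : nat) : bool := odd (k %/ 2 ^ r).

Definition polarK : 'M['F_2]_2 := \matrix_(a < 2, b < 2) (if (b <= a)%N then 1 else 0).

(* G_N = polarK^{\otimes n}, N = 2^n: by the entry formula of the iterated
   Kronecker product, entry (i,c) is the product over bit positions r of
   polarK (b_r(i)) (b_r(c)). *)
Definition polarG (n : nat) : 'M['F_2]_(2 ^ n) :=
  \matrix_(i < 2 ^ n, c < 2 ^ n)
    \prod_(r < n) polarK (inord (bit r i)) (inord (bit r c)).

Definition grow (n : nat) (i : 'I_(2 ^ n)) : 'rV['F_2]_(2 ^ n) := row i (polarG n).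

Definition wt (m : nat) (x : 'rV['F_2]_m) : nat := #|[set c : 'I_m | x 0 c != 0]|.

Definition tij (n i j : nat) : nat := (\sum_(k < n) (bit k i && bit k j : nat))%N.

(* Main.v *)
Require Import Defs.
From mathcomp Require Import all_boot all_order all_algebra.
From mathcomp Require Import zify.
Import GRing.Theory.

Definition S n k c := \big[andb/true]_(r < n) (bit r c ==> bit r k).
Definition X n (K : nat -> bool) c := odd (\sum_(0 <= k < 2 ^ n) (K k && S n k c)).
Definition W n (f : nat -> bool) := \sum_(0 <= c < 2 ^ n) (f c : nat).

Lemma bit_lt {n k} : k < 2 ^ n -> bit n k = false.
Proof. by move=> h; rewrite /bit divn_small. Qed.

Lemma bit_add r n k : r < n -> bit r (k + 2 ^ n) = bit r k.
Proof.
move=> h; rewrite /bit.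
rewrite divnDr; last by rewrite dvdn_exp2l // ltnW.
have e : 2 ^ n %/ 2 ^ r = 2 ^ (n - r).
  by rewrite (@expnB 2 n r) // ltnW.
rewrite e.
rewrite oddD oddX /=.
have -> : (n - r == 0) = false by apply/negbTE; rewrite subn_eq0 -ltnNge.
by rewrite addbF.
Qed.

Lemma bit_top {n k} : k < 2 ^ n -> bit n (k + 2 ^ n) = true.
Proof.
move=> h; rewrite /bit divnDr // divnn expn_gt0 /= divn_small //.
Qed.

Lemma S_succ n k c : S n.+1 k c = S n k c && (bit n c ==> bit n k).
Proof. by rewrite /S big_ord_recr. Qed.

Lemma S_shiftc n k c : S n k (c + 2 ^ n) = S n k c.
Proof. by apply: eq_bigr => r _; rewrite bit_add. Qed.

Lemma S_shiftk n k c : S n (k + 2 ^ n) c = S n k c.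
Proof. by apply: eq_bigr => r _; rewrite bit_add. Qed.

Lemma S_lo n k c : c < 2 ^ n -> S n.+1 k c = S n k c.
Proof. by move=> h; rewrite S_succ bit_lt // andbT. Qed.

Lemma S_hi n k c : c < 2 ^ n -> S n.+1 k (c + 2 ^ n) = S n k c && bit n k.
Proof. by move=> h; rewrite S_succ S_shiftc bit_top. Qed.

Lemma sum_split n (F : nat -> nat) :
  \sum_(0 <= k < 2 ^ n.+1) F k = \sum_(0 <= k < 2 ^ n) F k + \sum_(0 <= k < 2 ^ n) F (k + 2 ^ n).
Proof.
rewrite (@big_cat_nat _ _ _ (2 ^ n)) //=; last by rewrite expnS; lia.
congr (_ + _).
have -> : 2 ^ n = 0 + 2 ^ n by [].
rewrite big_addn /= expnS.
by have -> : 2 * 2 ^ n - 2 ^ n = 2 ^ n by lia.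
Qed.

Lemma W_split n f : W n.+1 f = W n f + W n (fun c => f (c + 2 ^ n)).
Proof. exact: sum_split. Qed.

Lemma W_eq n f g : (forall c, c < 2 ^ n -> f c = g c) -> W n f = W n g.
Proof. by move=> h; apply: eq_big_nat => c /andP[_ /h ->]. Qed.

Lemma W_le n (f g : nat -> nat) :
  (forall c, f c <= g c) -> \sum_(0 <= c < 2 ^ n) f c <= \sum_(0 <= c < 2 ^ n) g c.
Proof. by move=> h; apply: leq_sum => c _. Qed.

Lemma W_add n (f g : nat -> nat) :
  \sum_(0 <= c < 2 ^ n) (f c + g c) = \sum_(0 <= c < 2 ^ n) f c + \sum_(0 <= c < 2 ^ n) g c.
Proof. by rewrite big_split. Qed.

Lemma W_tri n f g : W n f <= W n (fun c => f c (+) g c) + W n g.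
Proof. rewrite /W -W_add; apply: W_le => c; by case: (f c); case: (g c). Qed.

Lemma W_xor n g v :
  W n (fun c => g c (+) v c) + W n v = W n g + 2 * W n (fun c => v c && ~~ g c).
Proof.
rewrite /W -W_add big_distrr -W_add; apply: eq_bigr => c _.
by case: (g c); case: (v c).
Qed.

Lemma W_tri2 n f g s :
  W n (fun c => f c && ~~ s c) <=
  W n (fun c => (f c (+) g c) && ~~ s c) + W n (fun c => g c && ~~ s c).
Proof. rewrite /W -W_add; apply: W_le => c; by case: (f c); case: (g c); case: (s c). Qed.

Lemma W_mono n (f g : nat -> bool) : (forall c, f c ==> g c) -> W n f <= W n g.
Proof. move=> h; apply: W_le => c; by move: (h c); case: (f c); case: (g c). Qed.

Lemma W_false n : W n (fun _ => false) = 0.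
Proof. by rewrite /W big1. Qed.

Lemma W_double n v : W n (fun c => false (+) v c) + W n v = 2 * W n v.
Proof. rewrite /W; rewrite mul2n -addnn; done. Qed.

Lemma tij_succ n a b : tij n.+1 a b = tij n a b + (bit n a && bit n b).
Proof. by rewrite /tij big_ord_recr. Qed.

Lemma tij_shl n a b : tij n (a + 2 ^ n) b = tij n a b.
Proof. by apply: eq_bigr => r _; rewrite bit_add. Qed.

Lemma tij_shr n a b : tij n a (b + 2 ^ n) = tij n a b.
Proof. by apply: eq_bigr => r _; rewrite bit_add. Qed.

Lemma X_lo n K c : c < 2 ^ n ->
  X n.+1 K c = X n K c (+) X n (fun k => K (k + 2 ^ n)) c.
Proof.
move=> hc; rewrite /X sum_split oddD; congr (odd _ (+) odd _).
  by apply: eq_big_nat => k _; rewrite S_lo.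
by apply: eq_big_nat => k _; rewrite S_lo // S_shiftk.
Qed.

Lemma X_hi n K c : c < 2 ^ n ->
  X n.+1 K (c + 2 ^ n) = X n (fun k => K (k + 2 ^ n)) c.
Proof.
move=> hc; rewrite /X sum_split.
rewrite (@eq_big_nat _ _ _ 0 (2 ^ n) _ (fun _ => 0)); last first.
  by move=> k /andP[_ hk]; rewrite S_hi // bit_lt // !andbF.
rewrite big1 // add0n; congr (odd _).
by apply: eq_big_nat => k /andP[_ hk]; rewrite S_hi // S_shiftk bit_top // andbT.
Qed.

Lemma X_empty n K c : (forall k, k < 2 ^ n -> ~~ K k) -> X n K c = false.
Proof.
move=> h; rewrite /X big1_seq //= => k; rewrite mem_index_iota => /andP[_ /h].
by move/negbTE => ->.
Qed.

Lemma sum_pred1 N i (s : nat -> bool) :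
  \sum_(0 <= k < N) ((k == i) && s k) = (i < N) && s i.
Proof.
elim: N => [|N IH]; first by rewrite big_geq.
rewrite big_nat_recr //= IH ltnS.
case: (ltngtP i N) => h /=.
- by rewrite addn0.
- by [].
- by rewrite h.
Qed.

Lemma X_single n (K : nat -> bool) i c : i < 2 ^ n -> K i -> (forall k, k < 2 ^ n -> k != i -> ~~ K k) ->
  X n K c = S n i c.
Proof.
move=> hi Ki h; rewrite /X.
have -> : \sum_(0 <= k < 2 ^ n) (K k && S n k c) = \sum_(0 <= k < 2 ^ n) ((k == i) && S n k c).
  apply: eq_big_nat => k /andP[_ hk]; case: (eqVneq k i) => [->|ne]; first by rewrite Ki.
  by rewrite (negbTE (h k hk ne)).
by rewrite sum_pred1 hi /=; case: (S n i c).
Qed.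

Lemma WS n i j : W n (fun c => S n i c && S n j c) = 2 ^ tij n i j.
Proof.
elim: n i j => [|n IH] i j.
  by rewrite /W /tij /S big_ord0 expn0 big_nat1 !big_ord0.
have e1 : W n (fun c => S n.+1 i c && S n.+1 j c) = W n (fun c => S n i c && S n j c).
  by apply: W_eq => c hc /=; rewrite !S_lo.
have e2 : W n (fun c => S n.+1 i (c + 2 ^ n) && S n.+1 j (c + 2 ^ n)) =
          W n (fun c => (bit n i && bit n j) && (S n i c && S n j c)).
  apply: W_eq => c hc /=; rewrite !S_hi //.
  by case: (bit n i); case: (bit n j); rewrite ?andbT ?andbF.
rewrite W_split e1 e2.
rewrite IH tij_succ; case: (bit n i); case: (bit n j) => /=;
  rewrite ?W_false ?IH ?addn0 // addn1 expnS; lia.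
Qed.

Lemma WS1 n i : W n (fun c => S n i c) = 2 ^ tij n i i.
Proof. by rewrite -WS; apply: W_eq => c _; rewrite andbb. Qed.

Lemma split_X n (K : nat -> bool) :
  W n.+1 (X n.+1 K) = W n (fun c => X n K c (+) X n (fun k => K (k + 2 ^ n)) c)
                      + W n (X n (fun k => K (k + 2 ^ n))).
Proof.
rewrite W_split; congr (_ + _); apply: W_eq => c hc; [by rewrite X_lo | by rewrite X_hi].
Qed.

Lemma split_XS n (K : nat -> bool) m :
  W n.+1 (fun c => X n.+1 K c && ~~ S n.+1 m c) =
  W n (fun c => (X n K c (+) X n (fun k => K (k + 2 ^ n)) c) && ~~ S n m c)
  + W n (fun c => X n (fun k => K (k + 2 ^ n)) c && ~~ (S n m c && bit n m)).
Proof.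
rewrite W_split; congr (_ + _); apply: W_eq => c hc;
  [by rewrite X_lo // S_lo | by rewrite X_hi // S_hi].
Qed.

Lemma Q n : forall (K : nat -> bool) j, j < 2 ^ n -> K j -> (forall k, k < j -> ~~ K k) ->
  2 ^ tij n j j <= W n (X n K).
Proof.
elim: n => [|n IH] K j hj Kj hmin.
  move: hj; rewrite expn0 ltnS leqn0 => /eqP ej; subst j.
  by rewrite /W /X /tij big_ord0 expn0 !big_nat1 /S big_ord0 Kj.
rewrite split_X.
set K2 := fun k => K (k + 2 ^ n).
case: (ltnP j (2 ^ n)) => hjn.
  have := IH K j hjn Kj hmin. have := W_tri n (X n K) (X n K2).
  rewrite tij_succ bit_lt // addn0. lia.
have hj' : j - 2 ^ n < 2 ^ n by move: hj; rewrite expnS; lia.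
have ej : j = (j - 2 ^ n) + 2 ^ n by lia.
move: (j - 2 ^ n) hj' ej => j' hj' ej.
have Xe : forall c, X n K c = false.
  by move=> c; apply: X_empty => k hk; apply: hmin; lia.
rewrite (@W_eq n _ (X n K2)); last by move=> c _; rewrite Xe.
have Kj' : K2 j' by rewrite /K2 -ej.
have hmin' : forall k, k < j' -> ~~ K2 k by move=> k hk; apply: hmin; lia.
have := IH K2 j' hj' Kj' hmin'.
rewrite ej tij_succ tij_shl tij_shr bit_top // addn1 expnS; lia.
Qed.

Lemma R n : forall (K : nat -> bool) j m, j < 2 ^ n -> K j -> (forall k, k < j -> ~~ K k) ->
  2 ^ tij n j j <= W n (fun c => X n K c && ~~ S n m c) + 2 ^ tij n m j.
Proof.
elim: n => [|n IH] K j m hj Kj hmin.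
  rewrite /tij !big_ord0 expn0; lia.
rewrite split_XS.
set K2 := fun k => K (k + 2 ^ n).
case: (ltnP j (2 ^ n)) => hjn.
  have := IH K j m hjn Kj hmin. have := W_tri2 n (X n K) (X n K2) (S n m).
  have : W n (fun c => X n K2 c && ~~ S n m c) <=
         W n (fun c => X n K2 c && ~~ (S n m c && bit n m)).
    by apply: W_mono => c; case: (X n K2 c); case: (S n m c); case: (bit n m).
  rewrite !tij_succ !(bit_lt hjn) !andbF !addn0. lia.
have hj' : j - 2 ^ n < 2 ^ n by move: hj; rewrite expnS; lia.
have ej : j = (j - 2 ^ n) + 2 ^ n by lia.
move: (j - 2 ^ n) hj' ej => j' hj' ej.
have Xe : forall c, X n K c = false.
  by move=> c; apply: X_empty => k hk; apply: hmin; lia.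
have Kj' : K2 j' by rewrite /K2 -ej.
have hmin' : forall k, k < j' -> ~~ K2 k by move=> k hk; apply: hmin; lia.
have := IH K2 j' m hj' Kj' hmin'.
have := @Q n K2 j' hj' Kj' hmin'.
rewrite (@W_eq n (fun c => (X n K c (+) X n K2 c) && ~~ S n m c)
                (fun c => X n K2 c && ~~ S n m c)); last by move=> c _; rewrite Xe.
rewrite ej !tij_succ tij_shl !tij_shr bit_top // addn1.
case: (bit n m) => /=.
  rewrite (@W_eq n (fun c => X n K2 c && ~~ (S n m c && true))
                (fun c => X n K2 c && ~~ S n m c)); last by move=> c _; rewrite andbT.
  rewrite addn1 !expnS; lia.
rewrite (@W_eq n (fun c => X n K2 c && ~~ (S n m c && false)) (X n K2)); last first.
  by move=> c _; rewrite andbF andbT.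
rewrite addn0 expnS; lia.
Qed.

Lemma P n : forall (K : nat -> bool) i j, i < j -> j < 2 ^ n -> K i -> K j ->
  (forall k, k < j -> k != i -> ~~ K k) ->
  2 ^ tij n i i + 2 ^ tij n j j <= W n (X n K) + 2 ^ (tij n i j).+1.
Proof.
elim: n => [|n IH] K i j hij hj Ki Kj hmin.
  move: hj; rewrite expn0; lia.
rewrite split_X.
set K2 := fun k => K (k + 2 ^ n).
case: (ltnP j (2 ^ n)) => hjn.
  have hin : i < 2 ^ n by lia.
  have := IH K i j hij hjn Ki Kj hmin. have := W_tri n (X n K) (X n K2).
  rewrite !tij_succ !(bit_lt hjn) !(bit_lt hin) !addn0. lia.
have hj' : j - 2 ^ n < 2 ^ n by move: hj; rewrite expnS; lia.
have ej : j = (j - 2 ^ n) + 2 ^ n by lia.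
have Kj' : K2 (j - 2 ^ n) by rewrite /K2 -ej.
case: (ltnP i (2 ^ n)) => hin.
  have Xe : forall c, X n K c = S n i c.
    move=> c; apply: X_single => // k hk; apply: hmin; lia.
  have hmin' : forall k, k < j - 2 ^ n -> ~~ K2 k.
    move=> k hk; apply: hmin; first lia.
    apply/negP => /eqP; lia.
  have := @R n K2 (j - 2 ^ n) i hj' Kj' hmin'.
  rewrite (@W_eq n (fun c => X n K c (+) X n K2 c) (fun c => S n i c (+) X n K2 c)); last first.
    by move=> c _; rewrite Xe.
  rewrite W_xor WS1.
  move: (j - 2 ^ n) hj' ej => j' hj' ej.
  rewrite ej !tij_succ !tij_shr tij_shl (bit_lt hin) (bit_top hj') /= ?addn0 ?addn1 ?expnS; lia.
have hi' : i - 2 ^ n < j - 2 ^ n by lia.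
have ei : i = (i - 2 ^ n) + 2 ^ n by lia.
have Ki' : K2 (i - 2 ^ n) by rewrite /K2 -ei.
have Xe : forall c, X n K c = false.
  by move=> c; apply: X_empty => k hk; apply: hmin; [lia | apply/negP => /eqP; lia].
have hmin' : forall k, k < j - 2 ^ n -> k != i - 2 ^ n -> ~~ K2 k.
  move=> k hk hne; apply: hmin; first lia.
  apply/negP => /eqP e; move/negP: hne; apply; apply/eqP; lia.
have := IH K2 _ _ hi' hj' Ki' Kj' hmin'.
rewrite (@W_eq n (fun c => X n K c (+) X n K2 c) (X n K2)); last by move=> c _; rewrite Xe.
have hi2 : i - 2 ^ n < 2 ^ n by lia.
move: (j - 2 ^ n) (i - 2 ^ n) hj' hi2 ej ei => j' i' hj2 hi2 ej ei.
rewrite ej ei !tij_succ !tij_shr !tij_shl (bit_top hj2) (bit_top hi2) /= ?addn1 ?expnS; lia.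
Qed.

Local Open Scope ring_scope.

Lemma F2_nat (m : nat) : (m%:R : 'F_2) = (odd m)%:R.
Proof. by rewrite -(@Fp_nat_mod 2) // modn2. Qed.
Lemma F2_val (y : 'F_2) : y = (y != 0)%:R.
Proof.
case: y => [[|[|m]] h]; first by apply: val_inj.
  by apply: val_inj.
by [].
Qed.
Lemma F2_xor (x y : bool) : ((x (+) y : nat)%:R : 'F_2) = x%:R + y%:R.
Proof. by rewrite -natrD [RHS]F2_nat oddD !oddb. Qed.
Lemma F2_neq0 (b : bool) : ((b%:R : 'F_2) != 0) = b.
Proof. by case: b; rewrite ?oner_neq0 ?eqxx. Qed.


Lemma W_xor2 n f g :
  (W n (fun c => f c (+) g c) + 2 * W n (fun c => f c && g c) = W n f + W n g)%N.
Proof.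
rewrite /W big_distrr -!W_add; apply: eq_bigr => c _.
by case: (f c); case: (g c).
Qed.

Lemma prod_and m (b : nat -> bool) :
  \prod_(r < m) ((b r)%:R : 'F_2) = (\big[andb/true]_(r < m) b r)%:R.
Proof.
elim: m => [|m IH]; first by rewrite !big_ord0.
rewrite !big_ord_recr /= IH.
by case: (\big[andb/true]_(i < m) b i); case: (b m); rewrite ?mulr1 ?mulr0 ?mul1r.
Qed.

Lemma prod_entry n (k c : nat) :
  \prod_(r < n) polarK (inord (bit r k)) (inord (bit r c)) = (S n k c)%:R.
Proof.
rewrite /S -(prod_and n (fun r => bit r c ==> bit r k)); apply: eq_bigr => r _.
rewrite /polarK mxE !inordK; try by case: (bit _ _).
by case: (bit r k); case: (bit r c).
Qed.

Lemma grow_entry n (k c : 'I_(2 ^ n)) : grow k 0 c = (S n k c)%:R.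
Proof. by rewrite /grow /polarG mxE mxE prod_entry. Qed.

Lemma wt_eq n (x : 'rV['F_2]_(2 ^ n)) (f : nat -> bool) :
  (forall c : 'I_(2 ^ n), x 0 c = (f c)%:R) -> wt x = W n f.
Proof.
move=> h; rewrite /wt -sum1_card big_mkcond /= /W big_mkord.
apply: eq_bigr => c _; rewrite in_set h F2_neq0; by case: (f c).
Qed.

Definition aa {n} (a : 'I_(2 ^ n) -> 'F_2) (k : nat) : bool :=
  match (insub k : option 'I_(2 ^ n)) with Some o => a o != 0 | None => false end.

Definition Kf (i j : nat) (a' : nat -> bool) (k : nat) : bool :=
  (k == i) (+) ((k == j) (+) ((j < k)%N && a' k)).

Lemma xor_and_R (x y s : bool) :
  (((x (+) y) && s : nat)%:R : 'F_2) = (x && s : nat)%:R + (y && s : nat)%:R.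
Proof. rewrite -F2_xor; congr (_%:R); by case: x; case: y; case: s. Qed.

Lemma entry n (i j : 'I_(2 ^ n)) (a : 'I_(2 ^ n) -> 'F_2) (c : 'I_(2 ^ n)) :
  (grow i + grow j + \sum_(k < 2 ^ n | (j < k)%N) a k *: grow k) 0 c
  = (X n (Kf i j (aa a)) c)%:R.
Proof.
rewrite !mxE summxE !prod_entry /X -F2_nat natr_sum big_mkord.
under eq_bigr do rewrite !mxE prod_entry.
under [RHS]eq_bigr do rewrite /Kf !xor_and_R.
rewrite !big_split /=.
rewrite addrA; congr (_ + _ + _).
- rewrite (bigD1 i) //= eqxx big1 ?addr0 // => k hk.
  by have -> : (nat_of_ord k == nat_of_ord i) = false by apply/negbTE.
- rewrite (bigD1 j) //= eqxx big1 ?addr0 // => k hk.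
  by have -> : (nat_of_ord k == nat_of_ord j) = false by apply/negbTE.
- rewrite [LHS]big_mkcond; apply: eq_bigr => k _; rewrite /aa valK.
  case: (j < k)%N => //=.
  rewrite {1}(F2_val (a k)); case: (a k != 0); case: (S n k c) => /=;
    by rewrite ?mul1r ?mul0r ?mulr1 ?mulr0.
Qed.

Theorem theorem5 (n : nat) (i j : 'I_(2 ^ n)) (hij : (i < j)%N) :
  (forall a : 'I_(2 ^ n) -> 'F_2,
     (wt (grow i + grow j) <=
      wt (grow i + grow j + \sum_(k < 2 ^ n | (j < k)%N) a k *: grow k))%N)
  /\ (wt (grow i + grow j) + 2 ^ (tij n i j).+1 = wt (grow i) + wt (grow j))%N.
Proof.
have e2 : wt (grow i + grow j) = W n (fun c => S n i c (+) S n j c).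
  by apply: wt_eq => c; rewrite !mxE !prod_entry F2_xor.
have ei : forall k : 'I_(2 ^ n), wt (grow k) = W n (fun c => S n k c).
  by move=> k; apply: wt_eq => c; rewrite grow_entry.
have hx := W_xor2 n (fun c => S n i c) (fun c => S n j c).
rewrite WS WS1 WS1 in hx.
split; last first.
  rewrite e2 !ei !WS1 expnS; lia.
move=> a.
rewrite e2 (@wt_eq n _ (X n (Kf i j (aa a)))); last by move=> c; rewrite entry.
have hji : (j == i :> nat) = false by apply/negbTE; rewrite neq_ltn hij orbT.
have hij' : (i == j :> nat) = false by rewrite eq_sym.
have Ki : Kf i j (aa a) i by rewrite /Kf eqxx hij' ltnNge (ltnW hij).
have Kj : Kf i j (aa a) j by rewrite /Kf eqxx hji ltnn.
have hmin : forall k, (k < j)%N -> k != i -> ~~ Kf i j (aa a) k.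
  move=> k hk hki; rewrite /Kf (negbTE hki) ltn_eqF // ltnNge (ltnW hk) //.
have := @P n (Kf i j (aa a)) i j hij (ltn_ord j) Ki Kj hmin.
rewrite expnS; lia.
Qed.
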